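(* Consider a fixed time interval $[0,T]$ divided into $L$ time steps, so that the CFL number $\mu=\mu(L)$ is proportional to the step size $T/L$ and hence $\mu(L)\to0$ as $L\to\infty$. Let $\mathbf{T}^{(L)}(\mu)=\mathbf{T}_S(\mu)\,\mathbf{T}_{\mathrm{CGC}}(\mu)$ be the PFASST iteration matrix for $L$ time steps (as defined in the context) with $\mu=\mu(L)$. Then $$\rho\Big(\lim_{L\to\infty}\mathbf{T}^{(L)}(\mu(L))\Big)\ge1.$$
   Context: Fix positive integers $M$ (collocation nodes), $N$ (spatial degrees of freedom), and coarse sizes $\tilde M\le M$, $\tilde N<N$ (coarsening in space). $\mathbf{Q}=(q_{m,j})\in\mathbb{R}^{M\times M}$ with $q_{m,j}=\int_0^{\tau_m}\ell_j(s)\,ds$ is the collocation matrix for the (right) Gauss–Radau nodes $0<\tau_1<\dots<\tau_M=1$ on $[0,1]$; $\mathbf{Q}_\Delta$, $\tilde{\mathbf{Q}}_\Delta$ are lower-triangular weight matrices of simpler quadrature rules on the fine and coarse nodes. $\mathbf{A}\in\mathbb{C}^{N\times N}$, $\tilde{\mathbf{A}}\in\mathbb{C}^{\tilde N\times\tilde N}$. $\mathbf{N}_M$, $\tilde{\mathbf{N}}_{\tilde M}$ are the $M\times M$, $\tilde M\times\tilde M$ matrices with ones in the last column and zeros elsewhere; $\mathbf{H}=\mathbf{N}_M\otimes\mathbf{I}_N$, $\tilde{\mathbf{H}}=\tilde{\mathbf{N}}_{\tilde M}\otimes\mathbf{I}_{\tilde N}$; $\mathbf{E}\in\mathbb{R}^{L\times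 L}$ has ones on the first subdiagonal and zeros elsewhere. $\mathbf{C}=\mathbf{I}_{LMN}-\mu\,\mathbf{I}_L\otimes\mathbf{Q}\otimes\mathbf{A}-\mathbf{E}\otimes\mathbf{H}$, $\hat{\mathbf{P}}=\mathbf{I}_{LMN}-\mu\,\mathbf{I}_L\otimes\mathbf{Q}_\Delta\otimes\mathbf{A}$, $\tilde{\mathbf{P}}=\mathbf{I}_{L\tilde M\tilde N}-\mu\,\mathbf{I}_L\otimes\tilde{\mathbf{Q}}_\Delta\otimes\tilde{\mathbf{A}}-\mathbf{E}\otimes\tilde{\mathbf{H}}$ (both invertible). Restriction $\mathbf{T}_F^C=\mathbf{I}_L\otimes\mathbf{T}_{F,Q}^C\otimes\mathbf{T}_{F,A}^C$ and interpolation $\mathbf{T}_C^F=\mathbf{I}_L\otimes\mathbf{T}_{C,Q}^F\otimes\mathbf{T}_{C,A}^F$ (standard Lagrangian transfer on the nodes and in space, $\mathbf{T}_{F,A}^C\in\mathbb{R}^{\tilde N\times N}$, $\mathbf{T}_{C,A}^F\in\mathbb{R}^{N\times\tilde N}$), with $(\mathbf{E}\otimes\tilde{\mathbf{H}})\mathbf{T}_F^C=\mathbf{T}_F^C(\mathbf{E}\otimes\mathbf{H})$. $\mathbf{T}_S(\mu)=\mathbf{I}_{LMN}-\hat{\mathbf{P}}^{-1}\mathbf{C}$, $\mathbf{T}_{\mathrm{CGC}}(\mu)=\mathbf{I}_{LMN}-\mathbf{T}_C^F\tilde{\mathbf{P}}^{-1}\mathbf{T}_F^C\mathbf{C}$.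 The limit $L\to\infty$ of these block matrices of growing size is understood as an infinite block Toeplitz operator in the sense of Bolten–Rittich: for an infinite block Toeplitz matrix with matrix-valued generating symbol $\hat{\mathbf{T}}(x)$, $x\in[-\pi,\pi]$, its spectral radius is $\operatorname{ess\,sup}_{x\in[-\pi,\pi]}\rho(\hat{\mathbf{T}}(x))$; $\rho$ denotes the spectral radius. *)

(* Defs.v *)
From HB Require Import structures.
From mathcomp Require Import all_boot all_order all_algebra.
From mathcomp Require Import all_classical all_reals all_analysis.
From mathcomp Require Import complex mxtens.

Set Implicit Arguments.
Unset Strict Implicit.
Unset Printing Implicit Defensive.

Import Order.TTheory GRing.Theory Num.Theory.
Import numFieldNormedType.Exports.
Local Open Scope classical_set_scope.
Local Open Scope ring_scope.

Section PFASST.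
Variable R : realType.
Local Notation C := (R[i]).

Definition lagr {n : nat} (t : 'I_n -> R) (j : 'I_n) : {poly R} :=
  \prod_(k < n | k != j) (('X - (t k)%:P) * ((t j - t k)^-1)%:P).

Definition pint (p : {poly R}) (a b : R) : R :=
  \sum_(i < size p) p`_i * (b ^+ i.+1 - a ^+ i.+1) / i.+1%:R.

Definition is_right_radau {n : nat} (t : 'I_n -> R) : Prop :=
  [/\ (forall i j : 'I_n, (i < j)%N -> t i < t j),
      (forall i, 0 < t i),
      (forall i : 'I_n, i.+1 = n -> t i = 1) &
      exists w : 'I_n -> R, forall p : {poly R},
        (size p <= (2 * n).-1)%N -> \sum_(i < n) w i * p.[t i] = pint p 0 1].

Definition Qcoll {n : nat} (t : 'I_n -> R) : 'M[R]_n :=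
  \matrix_(m, j) pint (lagr t j) 0 (t m).

Definition TQ_CF {m mc : nat} (tf : 'I_m -> R) (tc : 'I_mc -> R) : 'M[R]_(m, mc) :=
  \matrix_(i, j) (lagr tc j).[tf i].
Definition TQ_FC {m mc : nat} (tf : 'I_m -> R) (tc : 'I_mc -> R) : 'M[R]_(mc, m) :=
  \matrix_(j, i) (lagr tf i).[tc j].

Definition Nmat (n : nat) : 'M[R]_n := \matrix_(i, j) (j.+1 == n)%:R.
Definition Emat (L : nat) : 'M[R]_L := \matrix_(i, j) (i == j.+1 :> nat)%:R.

Definition cplx {m n : nat} (X : 'M[R]_(m, n)) : 'M[C]_(m, n) :=
  map_mx (real_complex R) X.

Variables (M N Mc Nc : nat) (tf : 'I_M -> R) (tc : 'I_Mc -> R)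
  (QD : 'M[R]_M) (QDc : 'M[R]_Mc) (A : 'M[C]_N) (Ac : 'M[C]_Nc)
  (TFCA : 'M[R]_(Nc, N)) (TCFA : 'M[R]_(N, Nc)).

Definition Hf : 'M[C]_(M * N) := cplx (Nmat M) *t (1%:M : 'M[C]_N).
Definition Hc : 'M[C]_(Mc * Nc) := cplx (Nmat Mc) *t (1%:M : 'M[C]_Nc).

Definition Cmat (L : nat) (mu : R) : 'M[C]_(L * (M * N)) :=
  1%:M - real_complex R mu *: ((1%:M : 'M[C]_L) *t (cplx (Qcoll tf) *t A))
       - cplx (Emat L) *t Hf.
Definition Phat (L : nat) (mu : R) : 'M[C]_(L * (M * N)) :=
  1%:M - real_complex R mu *: ((1%:M : 'M[C]_L) *t (cplx QD *t A)).
Definition Ptil (L : nat) (mu : R) : 'M[C]_(L * (Mc * Nc)) :=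
  1%:M - real_complex R mu *: ((1%:M : 'M[C]_L) *t (cplx QDc *t Ac))
       - cplx (Emat L) *t Hc.
Definition TFC (L : nat) : 'M[C]_(L * (Mc * Nc), L * (M * N)) :=
  (1%:M : 'M[C]_L) *t (cplx (TQ_FC tf tc) *t cplx TFCA).
Definition TCF (L : nat) : 'M[C]_(L * (M * N), L * (Mc * Nc)) :=
  (1%:M : 'M[C]_L) *t (cplx (TQ_CF tf tc) *t cplx TCFA).

Definition T_S (L : nat) (mu : R) : 'M[C]_(L * (M * N)) :=
  1%:M - invmx (Phat L mu) *m Cmat L mu.
Definition T_CGC (L : nat) (mu : R) : 'M[C]_(L * (M * N)) :=
  1%:M - TCF L *m invmx (Ptil L mu) *m TFC L *m Cmat L mu.
Definition T_PFASST (L : nat) (mu : R) : 'M[C]_(L * (M * N)) :=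
  T_S L mu *m T_CGC L mu.

End PFASST.

Section Toeplitz.
Variable R : realType.
Local Notation C := (R[i]).

(** Block (i, j) (of size K x K) of an (L*K) x (L*K) matrix; 0 if out of range. *)
Definition blk {L K : nat} (X : 'M[C]_(L * K)) (i j : nat) : 'M[C]_K :=
  match (insub i : option 'I_L), (insub j : option 'I_L) with
  | Some i', Some j' => \matrix_(a, b) X (mxtens_index (i', a)) (mxtens_index (j', b))
  | _, _ => 0
  end.

(** The block matrices X L (L -> oo) converge, blockwise and entrywise, to the
    infinite block lower-triangular Toeplitz operator with blocks t 0, t 1, ...
    (block (i,j) equal to t (i - j) for i >= j, and 0 for i < j). *)
Definition block_toeplitz_limit {K : nat} (X : forall L : nat, 'M[C]_(L * K))
    (t : nat -> 'M[C]_K) : Prop :=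
  forall (i j : nat) (a b : 'I_K),
    (fun L => Normc.normc (blk (X L) i j a b - (if (j <= i)%N then t (i - j)%N else 0) a b))
      @ \oo --> (0 : R).

Definition expi (y : R) : C := Complex (cos y) (sin y).

(** Generating symbol sum_k t_k e^{i k x} of a block Toeplitz operator whose
    blocks vanish from index K on. *)
Definition symbol {n : nat} (t : nat -> 'M[C]_n) (K : nat) (x : R) : 'M[C]_n :=
  \sum_(k < K) expi (k%:R * x) *: t k.

Definition specrad {n : nat} (B : 'M[C]_n) : R :=
  sup [set Normc.normc l | l in [set l : C | eigenvalue B l]].

Definition ess_sup_on (D : set R) (f : R -> R) : \bar R :=
  ereal_inf [set y : \bar R | \forall x \ae (@lebesgue_measure R), D x -> ((f x)%:E <= y)%E].

End Toeplitz.

(* Main.v *)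
Require Import Defs.
From HB Require Import structures.
From mathcomp Require Import all_boot all_order all_algebra.
From mathcomp Require Import all_classical all_reals all_analysis.
From mathcomp Require Import complex mxtens.
From mathcomp Require Import zify.
Set Implicit Arguments.
Unset Strict Implicit.
Unset Printing Implicit Defensive.
Import Order.TTheory GRing.Theory Num.Theory.
Import numFieldNormedType.Exports.
Local Open Scope classical_set_scope.
Local Open Scope ring_scope.
Section Alg.
Variable R : realType.
Local Notation C := (R[i]).

Lemma sum_tens (L q : nat) (F : 'I_(L * q) -> C) :
  \sum_(x < L * q) F x = \sum_(k < L) \sum_(c < q) F (mxtens_index (k, c)).
Proof.
rewrite (reindex (@mxtens_index L q)) /=; last first.
  by exists (@mxtens_unindex L q) => x _; [apply: mxtens_indexK|apply: mxtens_unindexK].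
rewrite pair_big /=; apply: eq_bigr => -[a b] _ //.
Qed.

Lemma mx_tens_eq (L p M q : nat) (X Y : 'M[C]_(L * p, M * q)) :
  (forall i a j b, X (mxtens_index (i, a)) (mxtens_index (j, b)) =
                   Y (mxtens_index (i, a)) (mxtens_index (j, b))) -> X = Y.
Proof.
move=> H; apply/matrixP=> x y.
by case: (mxtens_indexP x) => i a; case: (mxtens_indexP y) => j b; apply: H.
Qed.

Definition BT (L p q : nat) (t : nat -> 'M[C]_(p, q)) : 'M[C]_(L * p, L * q) :=
  \matrix_(x, y) (if ((mxtens_unindex y).1 <= (mxtens_unindex x).1)%N
     then t ((mxtens_unindex x).1 - (mxtens_unindex y).1)%N
            (mxtens_unindex x).2 (mxtens_unindex y).2 else 0).

Lemma BTE L p q (t : nat -> 'M[C]_(p, q)) i a j b :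
  BT L t (mxtens_index (i, a)) (mxtens_index (j, b)) =
  if (j <= i)%N then t (i - j)%N a b else 0.
Proof. by rewrite mxE !mxtens_indexK. Qed.

Definition conv p q r (s : nat -> 'M[C]_(p, q)) (t : nat -> 'M[C]_(q, r)) n :=
  \sum_(k < n.+1) s k *m t (n - k)%N.

Lemma window (L i j : nat) (G : nat -> C) : (i < L)%N ->
  \sum_(k < L) (if (j <= k <= i)%N then G k else 0) =
  if (j <= i)%N then \sum_(m < (i - j).+1) G (i - m)%N else 0.
Proof.
move=> iL; rewrite -big_mkcond /=.
case: (leqP j i) => ji; last first.
  apply: big1 => k /andP[jk ki]; exfalso; move: (leq_trans jk ki); by rewrite leqNgt ji.
have -> : \sum_(k < L | (j <= k <= i)%N) G k = \sum_(j <= k < i.+1) G k.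
  rewrite (big_nat_widen _ _ _ _ _ iL) big_geq_mkord.
  by apply: eq_bigl => k; rewrite andbC ltnS.
rewrite -{1}(add0n j) big_addn big_nat_rev /= big_mkord add0n.
have -> : (i.+1 - j = (i - j).+1)%N by rewrite subSn.
apply: eq_bigr => m _; have hm := ltn_ord m; congr G; lia.
Qed.

Lemma BT_mul L p q r (s : nat -> 'M[C]_(p, q)) (t : nat -> 'M[C]_(q, r)) :
  BT L s *m BT L t = BT L (conv s t).
Proof.
apply: mx_tens_eq => i a j b.
rewrite BTE mxE sum_tens.
under eq_bigr => k _ do under eq_bigr => c _ do rewrite !BTE.
transitivity (\sum_(k < L) (if (j <= k <= i)%N then (s (i - k)%N *m t (k - j)%N) a b else 0)).
  apply: eq_bigr => k _; rewrite mxE.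
  case: (leqP k i) => ki; case: (leqP j k) => jk /=; rewrite ?andbF //=.
  all: try (by apply: big1 => c _; rewrite ?mul0r ?mulr0).
rewrite (@window L i j (fun k => (s (i - k)%N *m t (k - j)%N) a b) (ltn_ord i)).
case: ifP => // ji; rewrite /conv summxE; apply: eq_bigr => m _.
have hm := ltn_ord m.
congr ((s _ *m t _) a b); lia.
Qed.

End Alg.
Section Alg2.
Variable R : realType.
Local Notation C := (R[i]).

Definition dser p q (X0 X1 : 'M[C]_(p, q)) (n : nat) : 'M[C]_(p, q) :=
  match n with 0 => X0 | 1 => X1 | _ => 0 end.

Lemma tensmxDr m n p q (A : 'M[C]_(m, n)) (B1 B2 : 'M[C]_(p, q)) :
  A *t (B1 + B2) = A *t B1 + A *t B2.
Proof. by apply: mx_tens_eq => i a j b; rewrite !mxE !mxtens_indexK mulrDr. Qed.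

Lemma tensmxNr m n p q (A : 'M[C]_(m, n)) (B : 'M[C]_(p, q)) :
  A *t (- B) = - (A *t B).
Proof. by apply: mx_tens_eq => i a j b; rewrite !mxE !mxtens_indexK mulrN. Qed.

Lemma tensmxZr m n p q (A : 'M[C]_(m, n)) (c : C) (B : 'M[C]_(p, q)) :
  A *t (c *: B) = c *: (A *t B).
Proof. by apply: mx_tens_eq => i a j b; rewrite !mxE !mxtens_indexK mulrCA. Qed.

Lemma one_tens L K : (1%:M : 'M[C]_(L * K)) = 1%:M *t 1%:M.
Proof.
apply: mx_tens_eq => i a j b; rewrite tensmxE !mxE.
rewrite (inj_eq (can_inj (@mxtens_indexK L K))) xpair_eqE.
by case: (i == j); case: (a == b); rewrite /= ?mulr1 ?mulr0 ?mul0r.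
Qed.

Lemma BT_dser L p q (X0 X1 : 'M[C]_(p, q)) :
  BT L (dser X0 X1) = (1%:M *t X0) + (cplx (Emat R L) *t X1).
Proof.
apply: mx_tens_eq => i a j b; rewrite BTE mxE tensmxE tensmxE !mxE.
rewrite rmorph_nat.
case: (leqP j i) => ji.
  case: (ltnP j i) => ji'.
    have -> : (i == j) = false by apply/eqP => /(congr1 val) /=; lia.
    case: (eqVneq (i : nat) j.+1) => [->|ne].
      by rewrite subSnn /= mul0r add0r mul1r.
    have : (1 < i - j)%N by lia.
    case: (i - j)%N => [|[|k]] //= _.
    by rewrite mxE !mul0r addr0.
  have -> : (i == j) = true by apply/eqP/ord_inj; lia.
  have -> : (i == j.+1 :> nat) = false by apply/eqP; lia.
  have -> : (i - j = 0)%N by lia.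
  by rewrite /= mul1r mul0r addr0.
have -> : (i == j) = false by apply/eqP => h; rewrite h ltnn in ji.
have -> : (i == j.+1 :> nat) = false by apply/eqP; lia.
by rewrite !mul0r addr0.
Qed.

Lemma BT_sub L p q (s t : nat -> 'M[C]_(p, q)) :
  BT L s - BT L t = BT L (fun n => s n - t n).
Proof.
apply: mx_tens_eq => i a j b; rewrite !mxE !mxtens_indexK.
by case: ifP => _; rewrite ?subr0 // !mxE.
Qed.

Lemma BT_one L K : (1%:M : 'M[C]_(L * K)) = BT L (dser 1%:M 0).
Proof. by rewrite BT_dser tensmx0 addr0 one_tens. Qed.

Lemma BT_inv L K (s t : nat -> 'M[C]_K) :
  BT L s *m BT L t = 1%:M -> invmx (BT L s) = BT L t.
Proof.
move=> h; have [u _] := mulmx1_unit h.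
by rewrite -[invmx _]mulmx1 -h mulmxA mulVmx // mul1mx.
Qed.

Lemma BT_unit0 L K (s : nat -> 'M[C]_K) :
  (0 < L)%N -> BT L s \in unitmx -> s 0%N \in unitmx.
Proof.
case: L s => // L s _ u.
pose Z : 'M[C]_K := \matrix_(c, b) (invmx (BT L.+1 s)) (mxtens_index (ord0, c)) (mxtens_index (ord0, b)).
suff h : s 0%N *m Z = 1%:M by case: (mulmx1_unit h).
apply/matrixP => a b.
move/matrixP: (mulmxV u) => /(_ (mxtens_index (ord0, a)) (mxtens_index (ord0, b))).
rewrite !mxE sum_tens big_ord_recl.
rewrite [X in _ + X]big1 ?addr0; last first.
  move=> k _; apply: big1 => c _; rewrite BTE.
  by have -> : (lift ord0 k <= ord0)%N = false; rewrite ?mul0r.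
rewrite (can_eq (@mxtens_indexK _ _)) xpair_eqE eqxx andTb.
move=> <-; apply: eq_bigr => c _; rewrite BTE /Z mxE leqnn subnn.
by [].
Qed.

Lemma conv_dserl p q r (X0 X1 : 'M[C]_(p, q)) (t : nat -> 'M[C]_(q, r)) n :
  conv (dser X0 X1) t n = X0 *m t n + (if n is n'.+1 then X1 *m t n' else 0).
Proof.
rewrite /conv; case: n => [|n].
  Time rewrite big_ord1 addr0 subn0. Time reflexivity.
Time rewrite big_ord_recl big_ord_recl big1 ?addr0.
  Time rewrite subn0. Time rewrite subSS subn0. Time reflexivity.
by move=> k _; rewrite mul0mx.
Time Qed.

Lemma conv_dserr p q r (s : nat -> 'M[C]_(p, q)) (Y0 Y1 : 'M[C]_(q, r)) n :
  conv s (dser Y0 Y1) n = s n *m Y0 + (if n is n'.+1 then s n' *m Y1 else 0).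
Proof.
rewrite /conv; case: n => [|n].
  rewrite big_ord1 addr0 subn0; reflexivity.
rewrite big_ord_recr big_ord_recr big1 /=.
  by rewrite add0r subnn subSn // subnn addrC.
move=> k _; have hk := ltn_ord k.
have -> : (n.+1 - widen_ord (leqnSn n.+1) (widen_ord (leqnSn n) k) = (n - k).+1)%N by rewrite /=; lia.
have : (0 < n - k)%N by lia.
case: (n - k)%N => // m _; rewrite mulmx0; reflexivity.
Time Qed.

End Alg2.
Section Alg3.
Variable R : realType.
Local Notation C := (R[i]).

Lemma BT_ext L p q (s t : nat -> 'M[C]_(p, q)) : s =1 t -> BT L s = BT L t.
Proof. by move=> e; apply: mx_tens_eq => i a j b; rewrite !BTE e. Qed.

Definition mpow K (X : 'M[C]_K) k := iter k (mulmx X) 1%:M.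

Lemma mpowS K (X : 'M[C]_K) k : mpow X k.+1 = X *m mpow X k.
Proof. by []. Qed.

Lemma mpowSr K (X : 'M[C]_K) k : mpow X k.+1 = mpow X k *m X.
Proof.
elim: k => [|k IH].
  by rewrite mpowS /mpow /= mulmx1 mul1mx.
by rewrite mpowS {1}IH mulmxA -mpowS.
Qed.

Lemma conv_phat K (d : 'M[C]_K) : d \in unitmx ->
  conv (dser d 0) (dser (invmx d) 0) =1 dser 1%:M 0.
Proof.
move=> u n; rewrite conv_dserl.
case: n => [|[|n]] /=.
- by rewrite mulmxV // addr0.
- by rewrite mulmx0 mul0mx addr0.
- by rewrite mulmx0 mul0mx addr0.
Qed.

Lemma conv_ptil K (d H : 'M[C]_K) : d \in unitmx ->
  conv (dser d (- H)) (fun n => mpow (invmx d *m H) n *m invmx d) =1 dser 1%:M 0.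
Proof.
move=> u n; rewrite conv_dserl.
case: n => [|n].
  by rewrite /mpow /= mul1mx mulmxV // addr0.
rewrite mpowS !mulmxA mulmxV // mul1mx -!mulmxA mulNmx addrN.
by case: n.
Qed.

Variables (M N Mc Nc : nat) (tf : 'I_M -> R) (tc : 'I_Mc -> R)
  (QD : 'M[R]_M) (QDc : 'M[R]_Mc) (A : 'M[C]_N) (Ac : 'M[C]_Nc)
  (TFCA : 'M[R]_(Nc, N)) (TCFA : 'M[R]_(N, Nc)).

Definition QA : 'M[C]_(M * N) := cplx (Qcoll tf) *t A.
Definition QDA : 'M[C]_(M * N) := cplx QD *t A.
Definition QDcA : 'M[C]_(Mc * Nc) := cplx QDc *t Ac.
Definition tfc0 : 'M[C]_(Mc * Nc, M * N) := cplx (TQ_FC tf tc) *t cplx TFCA.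
Definition tcf0 : 'M[C]_(M * N, Mc * Nc) := cplx (TQ_CF tf tc) *t cplx TCFA.
Definition dfin (x : R) : 'M[C]_(M * N) := 1%:M - real_complex R x *: QDA.
Definition dcrs (x : R) : 'M[C]_(Mc * Nc) := 1%:M - real_complex R x *: QDcA.
Definition cm (x : R) := dser (1%:M - real_complex R x *: QA) (- Hf R M N).
Definition phinv (x : R) := dser (invmx (dfin x)) 0.
Definition ptinv (x : R) (n : nat) := mpow (invmx (dcrs x) *m Hc R Mc Nc) n *m invmx (dcrs x).
Definition TSs (x : R) (n : nat) := dser 1%:M 0 n - conv (phinv x) (cm x) n.
Definition TCs (x : R) (n : nat) := dser 1%:M 0 n -
   conv (conv (conv (dser tcf0 0) (ptinv x)) (dser tfc0 0)) (cm x) n.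
Definition tau (x : R) := conv (TSs x) (TCs x).

Lemma tens_sub1 L K (c : C) (Y : 'M[C]_K) (Z : 'M[C]_(L * K)) :
  (1%:M : 'M[C]_(L * K)) - c *: ((1%:M : 'M[C]_L) *t Y) - Z =
  (1%:M : 'M[C]_L) *t (1%:M - c *: Y) - Z.
Proof. by rewrite one_tens tensmxDr tensmxNr tensmxZr. Qed.

Lemma Cmat_BT L x : Cmat tf A L x = BT L (cm x).
Proof.
rewrite /Cmat tens_sub1 /cm BT_dser tensmxNr.
by rewrite /QA.
Qed.

Lemma Phat_BT L x : Phat QD A L x = BT L (dser (dfin x) 0).
Proof.
rewrite /Phat BT_dser tensmx0 addr0 /dfin /QDA.
by rewrite one_tens tensmxDr tensmxNr tensmxZr.
Qed.

Lemma Ptil_BT L x : Ptil QDc Ac L x = BT L (dser (dcrs x) (- Hc R Mc Nc)).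
Proof.
rewrite /Ptil tens_sub1 BT_dser tensmxNr.
by rewrite /dcrs /QDcA.
Qed.

Lemma TFC_BT L : TFC tf tc TFCA L = BT L (dser tfc0 0).
Proof. by rewrite BT_dser tensmx0 addr0. Qed.

Lemma TCF_BT L : TCF tf tc TCFA L = BT L (dser tcf0 0).
Proof. by rewrite BT_dser tensmx0 addr0. Qed.

Lemma T_BT L x : dfin x \in unitmx -> dcrs x \in unitmx ->
  T_PFASST tf tc QD QDc A Ac TFCA TCFA L x = BT L (tau x).
Proof.
move=> u1 u2.
rewrite /T_PFASST /T_S /T_CGC !(BT_one R L (M * N)).
rewrite Phat_BT Cmat_BT Ptil_BT TFC_BT TCF_BT.
have -> : invmx (BT L (dser (dfin x) 0)) = BT L (phinv x).
  by apply: BT_inv; rewrite BT_mul; apply: (etrans (BT_ext _ (conv_phat u1))); rewrite -BT_one.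
have -> : invmx (BT L (dser (dcrs x) (- Hc R Mc Nc))) = BT L (ptinv x).
  by apply: BT_inv; rewrite BT_mul; apply: (etrans (BT_ext _ (conv_ptil _ u2))); rewrite -BT_one.
by rewrite !BT_mul !BT_sub BT_mul.
Qed.

End Alg3.
Section Alg4.
Variable R : realType.
Local Notation C := (R[i]).

Lemma conv_ext p q r (s1 s2 : nat -> 'M[C]_(p, q)) (t1 t2 : nat -> 'M[C]_(q, r)) :
  s1 =1 s2 -> t1 =1 t2 -> conv s1 t1 =1 conv s2 t2.
Proof. by move=> e1 e2 n; apply: eq_bigr => k _; rewrite e1 e2. Qed.

Variables (M N Mc Nc : nat) (tf : 'I_M -> R) (tc : 'I_Mc -> R)
  (QD : 'M[R]_M) (QDc : 'M[R]_Mc) (A : 'M[C]_N) (Ac : 'M[C]_Nc)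
  (TFCA : 'M[R]_(Nc, N)) (TCFA : 'M[R]_(N, Nc)).

Local Notation tfc := (tfc0 tf tc TFCA).
Local Notation tcf := (tcf0 tf tc TCFA).
Local Notation Hf' := (Hf R M N).
Local Notation Hc' := (Hc R Mc Nc).

Lemma comm_small :
  (cplx (Emat R 2) *t Hc') *m TFC tf tc TFCA 2 = TFC tf tc TFCA 2 *m (cplx (Emat R 2) *t Hf') ->
  Hc' *m tfc = tfc *m Hf'.
Proof.
have E1 : forall p q (X : 'M[C]_(p, q)), cplx (Emat R 2) *t X = BT 2 (dser 0 X).
  by move=> p q X; rewrite BT_dser tensmx0 add0r.
rewrite !E1 !TFC_BT !BT_mul => h.
apply/matrixP => a b.
move/matrixP: h => /(_ (mxtens_index (ord_max, a)) (mxtens_index (ord0, b))).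
rewrite !BTE subn0 !conv_dserl /=.
by rewrite !mul0mx add0r addr0.
Qed.

Hypothesis hcomm : Hc' *m tfc = tfc *m Hf'.

Lemma mpow_comm n : mpow Hc' n *m tfc = tfc *m mpow Hf' n.
Proof.
elim: n => [|n IH]; first by rewrite /mpow /= mul1mx mulmx1.
by rewrite !mpowSr -mulmxA hcomm mulmxA IH mulmxA.
Qed.

Definition tlim : nat -> 'M[C]_(M * N) :=
  dser 0 (Hf' *m (1%:M - tcf *m tfc)).

Lemma tau0 : tau tf tc QD QDc A Ac TFCA TCFA 0 =1 tlim.
Proof.
have r0 : real_complex R 0 = 0 by rewrite rmorph0.
have TS0 : TSs tf QD A 0 =1 dser 0 Hf'.
  move=> n; rewrite /TSs /phinv /dfin /cm r0 !scale0r !subr0 invmx1 conv_dserl.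
  case: n => [|[|n]] /=.
  - by rewrite mul1mx addr0 subrr.
  - by rewrite mul1mx mul0mx addr0 sub0r opprK.
  - by rewrite mul1mx mul0mx addr0 subrr.
have PT0 : ptinv QDc Ac 0 =1 mpow Hc'.
  by move=> n; rewrite /ptinv /dcrs r0 scale0r subr0 invmx1 mul1mx mulmx1.
have U : conv (conv (dser tcf 0) (ptinv QDc Ac 0)) (dser tfc 0) =1
         (fun n => tcf *m tfc *m mpow Hf' n).
  move=> n; rewrite conv_dserr conv_dserl PT0.
  case: n => [|n]; rewrite ?mul0mx ?mulmx0 ?addr0.
  - by rewrite -mulmxA mpow_comm mulmxA.
  - by rewrite -mulmxA mpow_comm mulmxA.
have TC0 : TCs tf tc QDc A Ac TFCA TCFA 0 =1 dser (1%:M - tcf *m tfc) 0.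
  move=> n; rewrite /TCs.
  rewrite (conv_ext U (fun _ => erefl)) /cm r0 scale0r subr0 conv_dserr.
  case: n => [|n] /=.
  - by rewrite /mpow /= !mulmx1 addr0.
  - rewrite mulmx1 mulmxN -mpowS mpowSr mulmxA subrr subr0.
    by case: n.
move=> n; rewrite /tau (conv_ext TS0 TC0) conv_dserl mul0mx add0r.
case: n => [|[|n]] //=.
by case: n => [|n]; rewrite mulmx0.
Qed.

End Alg4.
Section Ana.
Variable R : realType.
Local Notation C := (R[i]).

Record ccvg (f : nat -> C) (l : C) : Prop :=
  CCvg { ccvgP : (f : nat -> R[i]^o) @ \oo --> (l : R[i]^o) }.

Lemma ccvgM (f g : nat -> C) a b : ccvg f a -> ccvg g b -> ccvg (fun n => f n * g n) (a * b).
Proof. move=> [hf] [hg]; constructor. exact: (@cvgM (R[i]^o) nat \oo _ f g a b hf hg). Qed.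
Lemma ccvgV (f : nat -> C) a : a != 0 -> ccvg f a -> ccvg (fun n => (f n)^-1) (a^-1).
Proof. move=> ha [hf]; constructor. exact: (@cvgV (R[i]^o) nat \oo _ f a ha hf). Qed.
Lemma ccvgD (f g : nat -> C) a b : ccvg f a -> ccvg g b -> ccvg (fun n => f n + g n) (a + b).
Proof. move=> [hf] [hg]; constructor. exact: (@cvgD (R[i]^o) (R[i]^o) nat \oo _ f g a b hf hg). Qed.
Lemma ccvgN (f : nat -> C) a : ccvg f a -> ccvg (fun n => - f n) (- a).
Proof. move=> [hf]; constructor. exact: (@cvgN (R[i]^o) (R[i]^o) nat \oo _ f a hf). Qed.
Lemma ccvg_cst (a : C) : ccvg (fun _ => a) a.
Proof. constructor; exact: cvg_cst. Qed.
Lemma ccvgB (f g : nat -> C) a b : ccvg f a -> ccvg g b -> ccvg (fun n => f n - g n) (a - b).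
Proof. move=> hf hg. apply: ccvgD. exact: hf. apply: ccvgN. exact: hg. Qed.

Lemma ccvg_ext (f g : nat -> C) l : ccvg f l -> (forall n, f n = g n) -> ccvg g l.
Proof. move=> h e. move: h. have -> : g = f by apply: funext => n; rewrite e. exact. Qed.

Lemma ccvg_near (f g : nat -> C) l : (\forall n \near \oo, f n = g n) -> ccvg f l -> ccvg g l.
Proof.
move=> e [hf]; constructor.
apply: cvg_trans hf.
by apply: (@near_eq_cvg nat (R[i]^o) \oo _ f g); apply: filterS e.
Qed.

Lemma ccvg_sum (I : Type) (r : seq I) (P : pred I) (F : I -> nat -> C) (G : I -> C) :
  (forall i, P i -> ccvg (F i) (G i)) ->
  ccvg (fun n => \sum_(i <- r | P i) F i n) (\sum_(i <- r | P i) G i).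
Proof.
move=> h; elim: r => [|x r IH].
  rewrite big_nil; refine (ccvg_ext (ccvg_cst 0) _) => n; by rewrite big_nil.
rewrite big_cons; case: (boolP (P x)) => px.
  by refine (ccvg_ext (ccvgD (h x px) IH) _) => n; rewrite big_cons px.
by refine (ccvg_ext IH _) => n; rewrite big_cons (negbTE px).
Qed.

Lemma ccvg_prod (I : Type) (r : seq I) (P : pred I) (F : I -> nat -> C) (G : I -> C) :
  (forall i, P i -> ccvg (F i) (G i)) ->
  ccvg (fun n => \prod_(i <- r | P i) F i n) (\prod_(i <- r | P i) G i).
Proof.
move=> h; elim: r => [|x r IH].
  rewrite big_nil; refine (ccvg_ext (ccvg_cst 1) _) => n; by rewrite big_nil.
rewrite big_cons; case: (boolP (P x)) => px.
  by refine (ccvg_ext (ccvgM (h x px) IH) _) => n; rewrite big_cons px.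
by refine (ccvg_ext IH _) => n; rewrite big_cons (negbTE px).
Qed.

Definition mcvg p q (X : nat -> 'M[C]_(p, q)) (Y : 'M[C]_(p, q)) :=
  forall a b, ccvg (fun n => X n a b) (Y a b).

Lemma mcvg_cst p q (Y : 'M[C]_(p, q)) : mcvg (fun _ => Y) Y.
Proof. by move=> a b; apply: ccvg_cst. Qed.

Lemma mcvgB p q (X1 X2 : nat -> 'M[C]_(p, q)) Y1 Y2 :
  mcvg X1 Y1 -> mcvg X2 Y2 -> mcvg (fun n => X1 n - X2 n) (Y1 - Y2).
Proof.
move=> h1 h2 a b; rewrite !mxE; refine (ccvg_ext (ccvgB (h1 a b) (h2 a b)) _) => n.
by rewrite !mxE.
Qed.

Lemma mcvgN p q (X : nat -> 'M[C]_(p, q)) Y : mcvg X Y -> mcvg (fun n => - X n) (- Y).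
Proof.
move=> h a b; rewrite !mxE; refine (ccvg_ext (ccvgN (h a b)) _) => n; by rewrite !mxE.
Qed.

Lemma mcvgZ p q (c : nat -> C) c0 (X : nat -> 'M[C]_(p, q)) Y :
  ccvg c c0 -> mcvg X Y -> mcvg (fun n => c n *: X n) (c0 *: Y).
Proof.
move=> hc h a b; rewrite !mxE; refine (ccvg_ext (ccvgM hc (h a b)) _) => n; by rewrite !mxE.
Qed.

Lemma mcvgM p q r (X1 : nat -> 'M[C]_(p, q)) (X2 : nat -> 'M[C]_(q, r)) Y1 Y2 :
  mcvg X1 Y1 -> mcvg X2 Y2 -> mcvg (fun n => X1 n *m X2 n) (Y1 *m Y2).
Proof.
move=> h1 h2 a b; rewrite mxE.
refine (ccvg_ext (@ccvg_sum _ _ _ _ _ (fun k _ => ccvgM (h1 a k) (h2 k b))) _) => n.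
by rewrite !mxE.
Qed.

Lemma ccvg_det n (X : nat -> 'M[C]_n) Y : mcvg X Y -> ccvg (fun k => \det (X k)) (\det Y).
Proof.
move=> h; rewrite /determinant.
apply: ccvg_sum => s _; apply: ccvgM; first exact: ccvg_cst.
by apply: ccvg_prod => i _; apply: h.
Qed.

Lemma mcvg_adj n (X : nat -> 'M[C]_n) Y : mcvg X Y -> mcvg (fun k => \adj (X k)) (\adj Y).
Proof.
move=> h a b; rewrite mxE /cofactor.
refine (ccvg_ext (ccvgM (ccvg_cst _) (ccvg_det (X := fun k => row' b (col' a (X k))) _)) _).
  move=> i j; rewrite !mxE; refine (ccvg_ext (h (lift b i) (lift a j)) _) => k; by rewrite !mxE.
by move=> k; rewrite mxE /cofactor.
Qed.

Lemma mcvg_inv n (X : nat -> 'M[C]_n) Y : mcvg X Y -> Y \in unitmx ->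
  mcvg (fun k => invmx (X k)) (invmx Y).
Proof.
move=> h u a b.
have hd := ccvg_det h.
have dY : \det Y != 0 by rewrite -unitfE -unitmxE.
have ev : \forall k \near \oo, \det (X k) != 0.
  case: hd => hd.
  exact: (@cvgr_neq0 (R[i]^o) (R[i]^o) nat \oo _ (fun k => \det (X k)) _ hd dY).
rewrite /invmx u mxE.
apply: (ccvg_near (f := fun k => (\det (X k))^-1 * \adj (X k) a b)).
  apply: filterS ev => k dk.
  rewrite /invmx unitmxE unitfE dk [RHS]mxE. reflexivity.
by apply: ccvgM; [apply: ccvgV|apply: mcvg_adj].
Qed.

Lemma mcvg_pow n (X : nat -> 'M[C]_n) Y : mcvg X Y ->
  forall m, mcvg (fun k => mpow (X k) m) (mpow Y m).
Proof.
move=> h; elim => [|m IH]; first exact: mcvg_cst.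
exact: mcvgM.
Qed.

Definition scvg p q (S : nat -> nat -> 'M[C]_(p, q)) (T : nat -> 'M[C]_(p, q)) :=
  forall m, mcvg (fun k => S k m) (T m).

Lemma scvg_dser p q (X0 X1 : nat -> 'M[C]_(p, q)) Y0 Y1 :
  mcvg X0 Y0 -> mcvg X1 Y1 -> scvg (fun k => dser (X0 k) (X1 k)) (dser Y0 Y1).
Proof. by move=> h0 h1 [|[|m]] //=; apply: mcvg_cst. Qed.

Lemma scvg_cst p q (T : nat -> 'M[C]_(p, q)) : scvg (fun _ => T) T.
Proof. by move=> m; apply: mcvg_cst. Qed.

Lemma scvg_sub p q (S1 S2 : nat -> nat -> 'M[C]_(p, q)) T1 T2 :
  scvg S1 T1 -> scvg S2 T2 -> scvg (fun k m => S1 k m - S2 k m) (fun m => T1 m - T2 m).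
Proof. by move=> h1 h2 m; apply: mcvgB. Qed.

Lemma scvg_conv p q r (S1 : nat -> nat -> 'M[C]_(p, q)) (S2 : nat -> nat -> 'M[C]_(q, r)) T1 T2 :
  scvg S1 T1 -> scvg S2 T2 -> scvg (fun k => conv (S1 k) (S2 k)) (conv T1 T2).
Proof.
move=> h1 h2 m a b; rewrite /conv summxE.
refine (ccvg_ext (@ccvg_sum _ _ _ _ _ (fun (j : 'I_m.+1) _ => mcvgM (h1 j) (h2 (m - j)%N) a b)) _) => k.
by rewrite summxE.
Qed.

End Ana.
Section Spec.
Variable R : realType.
Local Notation C := (R[i]).

Lemma normcC (z : C) : real_complex R (Normc.normc z) = `|z|.
Proof. by case: z => a b; rewrite normc_def. Qed.

Lemma normcC' (z : C) : (real_complex R : {rmorphism R -> R[i]}) (Normc.normc z) = `|z|.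
Proof. exact: normcC. Qed.

Lemma eig_bound n (B : 'M[C]_n) (l : C) : eigenvalue B l ->
  Normc.normc l <= \sum_j \sum_i Normc.normc (B i j).
Proof.
move/eigenvalueP => [w hw w0].
rewrite -lecR normcC rmorph_sum.
under eq_bigr => j _ do rewrite rmorph_sum.
under eq_bigr => j _ do under eq_bigr => i _ do rewrite normcC'.
set S := \sum_j `|w 0 j|.
have S0 : 0 < S.
  move/matrix0Pn: w0 => [i0 [j wij]].
  rewrite (ord1 i0) in wij.
  apply: (@lt_le_trans _ _ `|w 0 j|); first by rewrite normr_gt0.
  rewrite /S (bigD1 j) //= lerDl; apply: sumr_ge0 => k _; exact: normr_ge0.
have wS : forall i, `|w 0 i| <= S.
  move=> i; rewrite /S (bigD1 i) //= lerDl; apply: sumr_ge0 => k _; exact: normr_ge0.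
rewrite -(ler_pM2r S0).
have -> : `|l| * S = \sum_j `|\sum_i w 0 i * B i j|.
  rewrite /S mulr_sumr; apply: eq_bigr => j _.
  have := congr1 (fun X : 'rV[C]_n => X 0 j) hw; rewrite /= !mxE => ->.
  by rewrite normrM.
rewrite mulr_suml; apply: ler_sum => j _.
apply: (le_trans (ler_norm_sum _ _ _)).
rewrite mulr_suml; apply: ler_sum => i _.
rewrite normrM mulrC; apply: ler_wpM2l; first exact: normr_ge0.
exact: wS.
Qed.

Lemma specrad_ge n (B : 'M[C]_n) (l : C) (v : 'cV[C]_n) :
  v != 0 -> B *m v = l *: v -> Normc.normc l <= specrad B.
Proof.
move=> v0 hv.
have el : eigenvalue B l.
  rewrite /eigenvalue /eigenspace kermx_eq0 row_free_unit.
  apply/negP => u; move/negP: v0; apply.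
  have e : (B - l%:M) *m v = 0 by rewrite mulmxBl hv mul_scalar_mx subrr.
  by rewrite -[v]mul1mx -(mulVmx u) -mulmxA e mulmx0.
apply: ub_le_sup; last by exists l.
exists (\sum_j \sum_i Normc.normc (B i j)) => y [l' hl' <-].
exact: eig_bound.
Qed.

End Spec.
Section Conv.
Variable R : realType.
Local Notation C := (R[i]).

Lemma normc_ge0 (z : C) : 0 <= Normc.normc z.
Proof. by case: z => a b /=; apply: sqrtr_ge0. Qed.

Lemma normc_real (x : R) : Normc.normc (real_complex R x) = `|x|.
Proof. by rewrite /= expr0n /= addr0 sqrtr_sqr. Qed.

Lemma ccvg_normc (f : nat -> C) l : ccvg f l ->
  (fun n => Normc.normc (f n - l)) @ \oo --> (0 : R).
Proof.
case=> h; apply/cvgrPdist_lt => e e0.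
move/cvgrPdist_lt: h => /(_ (real_complex R e : R[i]^o)).
have e0' : (0 : R[i]^o) < real_complex R e by rewrite ltcR.
move=> /(_ e0'); apply: filterS => n hn.
rewrite sub0r normrN ger0_norm ?normc_ge0 //.
rewrite -ltcR normcC -normrN opprB; exact: hn.
Qed.

Lemma ccvg_rc (r : nat -> R) (l : R) : r @ \oo --> l ->
  ccvg (fun n => real_complex R (r n)) (real_complex R l).
Proof.
move=> h; constructor; apply/cvgrPdist_lt => e e0.
move: e0; rewrite ltcE => /andP[/eqP ie re].
move/cvgrPdist_lt: h => /(_ _ re); apply: filterS => n hn.
have -> : (real_complex R l - real_complex R (r n) : R[i]^o) = real_complex R (l - r n).
  by rewrite rmorphB.
rewrite -normcC normc_real ltcE /= ie eqxx /=; exact: hn.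
Qed.

Lemma mu_cvg0 (c Tend : R) : (fun L : nat => c * (Tend / L%:R)) @ \oo --> (0 : R).
Proof.
rewrite -cvg_shiftS.
have h : (fun n => c * Tend * (harmonic n : R)) @ \oo --> c * Tend * 0.
  by apply: cvgMr; exact: cvg_harmonic.
rewrite mulr0 in h.
apply: cvg_trans h; apply: near_eq_cvg; near=> n => /=.
by rewrite /harmonic /= mulrA.
Unshelve. all: by end_near.
Qed.

Lemma ess_ge1 (f : R -> R) : (forall x, 1 <= f x) ->
  (1%:E <= ess_sup_on `[(- pi)%R, (pi : R)] f)%E.
Proof.
move=> hf; rewrite /ess_sup_on; apply/ereal_infP => y hy.
case: (leP 1%:E y) => // ylt; exfalso.
move: hy => [A [mA muA sub]].
have DA : `[(- pi)%R, (pi : R)] `<=` A.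
  move=> x Dx; apply: sub => /= /(_ Dx) h.
  have := lt_le_trans ylt (le_trans _ h).
  by rewrite lee_fin ltxx => /(_ (hf x)).
have := le_measure lebesgue_measure (mem_set (measurable_itv `[(- pi)%R, pi])) (mem_set mA) DA.
move=> H.
have H2 : (lebesgue_measure (`[(- pi)%R, (pi:R)]%classic) <= 0)%E.
  apply: (le_trans H); rewrite le_eqVlt; apply/orP; left; apply/eqP; exact: muA.
have p0 : (0 : R) < pi := pi_gt0 _.
have pp : - pi < (pi : R) by rewrite (@lt_trans _ _ 0) // oppr_lt0.
move: H2; rewrite lebesgue_measure_itv /= lte_fin pp /= lee_fin.
rewrite leNgt subr_gt0 pp.
by [].
Qed.

End Conv.
Section Main.
Variable R : realType.
Local Notation C := (R[i]).

Lemma ker_vec Nc N (T : 'M[C]_(Nc, N)) : (Nc < N)%N ->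
  exists2 w : 'cV[C]_N, w != 0 & T *m w = 0.
Proof.
move=> hN.
set K := kermx T^T.
have kz : K != 0.
  rewrite /K kermx_eq0 /row_free mxrank_tr; apply/negP => /eqP e.
  have := rank_leq_row T; rewrite e; lia.
have [i ri] : exists i, row i K != 0.
  case: (pickP (fun i => row i K != 0)) => [i h|h]; first by exists i.
  move/negP: kz; case; apply/eqP/row_matrixP => i; rewrite row0.
  by apply/eqP; move: (h i) => /negbFE.
exists (row i K)^T; first by rewrite trmx_eq0.
by rewrite -[T]trmxK -trmx_mul -row_mul mulmx_ker row0 trmx0.
Qed.

Lemma blk_BT L K (s : nat -> 'M[C]_K) (i j : nat) : (i < L)%N -> (j < L)%N ->
  blk (BT L s) i j = if (j <= i)%N then s (i - j)%N else 0.
Proof.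
move=> hi hj; rewrite /blk (insubT (fun k => (k < L)%N) hi) (insubT (fun k => (k < L)%N) hj).
apply/matrixP => a b; rewrite mxE BTE /=.
by case: ifP => _; rewrite ?mxE.
Qed.

Variables (M N Mc Nc : nat) (tf : 'I_M -> R) (tc : 'I_Mc -> R)
  (QD : 'M[R]_M) (QDc : 'M[R]_Mc) (A : 'M[C]_N) (Ac : 'M[C]_Nc)
  (TFCA : 'M[R]_(Nc, N)) (TCFA : 'M[R]_(N, Nc)).

Local Notation tfc := (tfc0 tf tc TFCA).
Local Notation tcf := (tcf0 tf tc TCFA).
Local Notation Hf' := (Hf R M N).
Local Notation Hc' := (Hc R Mc Nc).

Lemma scvg_conv' p q r (S1 : nat -> nat -> 'M[C]_(p, q)) (S2 : nat -> nat -> 'M[C]_(q, r)) T1 T2 :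
  scvg S1 T1 -> scvg S2 T2 -> scvg (fun k m => conv (S1 k) (S2 k) m) (fun m => conv T1 T2 m).
Proof. exact: scvg_conv. Qed.

Lemma tau_cvg (mu : nat -> R) :
  ccvg (fun L => real_complex R (mu L)) (real_complex R 0) ->
  scvg (fun L => tau tf tc QD QDc A Ac TFCA TCFA (mu L)) (tau tf tc QD QDc A Ac TFCA TCFA 0).
Proof.
move=> hrc.
have hcm : scvg (fun L => cm tf A (mu L)) (cm tf A 0).
  apply: scvg_dser; last exact: mcvg_cst.
  apply: mcvgB; first exact: mcvg_cst.
  apply: mcvgZ; [exact: hrc | exact: mcvg_cst].
have hdf : mcvg (fun L => invmx (dfin QD A (mu L))) (invmx (dfin QD A 0)).
  apply: mcvg_inv.
    apply: mcvgB; first exact: mcvg_cst.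
    apply: mcvgZ; [exact: hrc | exact: mcvg_cst].
  by rewrite /dfin rmorph0 scale0r subr0 unitmx1.
have hdc : mcvg (fun L => invmx (dcrs QDc Ac (mu L))) (invmx (dcrs QDc Ac 0)).
  apply: mcvg_inv.
    apply: mcvgB; first exact: mcvg_cst.
    apply: mcvgZ; [exact: hrc | exact: mcvg_cst].
  by rewrite /dcrs rmorph0 scale0r subr0 unitmx1.
have hpt : scvg (fun L => ptinv QDc Ac (mu L)) (ptinv QDc Ac 0).
  move=> n; apply: mcvgM; last exact: hdc.
  apply: mcvg_pow; apply: mcvgM; [exact: hdc | exact: mcvg_cst].
apply: scvg_conv.
  rewrite /TSs; apply: scvg_sub; first exact: scvg_cst.
  apply: scvg_conv'; last exact: hcm.
  rewrite /phinv; apply: scvg_dser; [exact: hdf | exact: mcvg_cst].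
rewrite /TCs; apply: scvg_sub; first exact: scvg_cst.
apply: scvg_conv'; last exact: hcm.
apply: scvg_conv; last exact: scvg_cst.
apply: scvg_conv; first exact: scvg_cst.
exact: hpt.
Qed.

End Main.
Section Eig.
Variable R : realType.
Local Notation C := (R[i]).
Variables (M N Mc Nc : nat) (tf : 'I_M -> R) (tc : 'I_Mc -> R)
  (TFCA : 'M[R]_(Nc, N)) (TCFA : 'M[R]_(N, Nc)).

Local Notation tfc := (tfc0 tf tc TFCA).
Local Notation tcf := (tcf0 tf tc TCFA).
Local Notation Hf' := (Hf R M N).

Variable w : 'cV[C]_N.
Hypothesis w0 : w != 0.
Hypothesis hw : cplx TFCA *m w = 0.
Hypothesis M0 : (0 < M)%N.

Definition vv : 'cV[C]_(M * N) := \col_y w (mxtens_unindex y).2 0.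

Lemma vv_neq0 : vv != 0.
Proof.
move/matrix0Pn: w0 => [b [z wb]].
rewrite (ord1 z) in wb.
apply/matrix0Pn; exists (mxtens_index (Ordinal M0, b)), 0.
by rewrite mxE mxtens_indexK.
Qed.

Lemma tfc_vv : tfc *m vv = 0.
Proof.
apply/matrixP => x z; case: (mxtens_indexP x) => j b.
rewrite !mxE sum_tens big1 // => k _.
under eq_bigr => c _ do rewrite tensmxE !mxE mxtens_indexK /= -mulrA.
rewrite -mulr_sumr.
apply/eqP; rewrite mulf_eq0; apply/orP; right; apply/eqP.
transitivity ((cplx TFCA *m w) b 0); last by rewrite hw mxE.
by rewrite [RHS]mxE; apply: eq_bigr => i _; rewrite [in RHS]mxE.
Qed.

Lemma Hf_vv : Hf' *m vv = vv.
Proof.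
apply/matrixP => x z; case: (mxtens_indexP x) => i a.
rewrite !mxE sum_tens mxtens_indexK /=.
transitivity (\sum_(k < M) real_complex R (Nmat R M i k) * w a 0).
  apply: eq_bigr => k _.
  rewrite (bigD1 a) //= big1 ?addr0.
    by rewrite tensmxE !mxE mxtens_indexK eqxx mulr1.
  by move=> c ca; rewrite tensmxE !mxE (eq_sym a c) (negbTE ca) mulr0 mul0r.
rewrite -mulr_suml.
suff -> : \sum_(k < M) real_complex R (Nmat R M i k) = 1 by rewrite mul1r.
case: M M0 i vv tfc Hf' => // M' _ i _ _ _.
rewrite big_ord_recr /= big1 ?add0r.
  by rewrite mxE eqxx rmorph1.
move=> k _; rewrite mxE /=.
have -> : (k.+1 == M'.+1) = false by apply/eqP; have := ltn_ord k; lia.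
by rewrite rmorph0.
Qed.

Lemma t1_vv : (Hf' *m (1%:M - tcf *m tfc)) *m vv = vv.
Proof.
by rewrite -mulmxA mulmxBl mul1mx -mulmxA tfc_vv mulmx0 subr0 Hf_vv.
Qed.

End Eig.
Unset Implicit Arguments.

Theorem theorem6 (R : realType) (M N Mc Nc : nat)
  (tf : 'I_M -> R) (tc : 'I_Mc -> R)
  (QD : 'M[R]_M) (QDc : 'M[R]_Mc) (A : 'M[R[i]]_N) (Ac : 'M[R[i]]_Nc)
  (TFCA : 'M[R]_(Nc, N)) (TCFA : 'M[R]_(N, Nc))
  (Tend c : R) (mu : nat -> R) :
  (0 < Mc)%N -> (Mc <= M)%N -> (Nc < N)%N ->
  is_right_radau tf -> is_right_radau tc ->
  is_trig_mx QD -> is_trig_mx QDc ->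
  0 < Tend -> 0 < c -> (forall L : nat, mu L = c * (Tend / L%:R)) ->
  (forall L : nat, Phat QD A L (mu L) \in unitmx) ->
  (forall L : nat, Ptil QDc Ac L (mu L) \in unitmx) ->
  (forall L : nat,
     (cplx (Emat R L) *t Hc R Mc Nc) *m TFC tf tc TFCA L
     = TFC tf tc TFCA L *m (cplx (Emat R L) *t Hf R M N)) ->
  exists t : nat -> 'M[R[i]]_(M * N),
    block_toeplitz_limit
      (fun L => T_PFASST tf tc QD QDc A Ac TFCA TCFA L (mu L)) t /\
    exists K : nat, (forall k : nat, (K <= k)%N -> t k = 0) /\
      (1%:E <= ess_sup_on `[(- pi)%R, (pi : R)] (fun x => specrad (symbol t K x)))%E.
Proof.
move=> HMc HMcM HN _ _ _ _ _ _ hmu hP hPt hE.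
have M0 : (0 < M)%N by apply: leq_trans HMcM.
have hcomm := comm_small (hE 2%N).
exists (tlim tf tc TFCA TCFA); split.
  move=> i j a b.
  have hmu0 : mu @ \oo --> (0 : R).
    have -> : mu = (fun L => c * (Tend / L%:R)) by apply: funext.
    exact: mu_cvg0.
  have hs := tau_cvg tf tc QD QDc A Ac TFCA TCFA (ccvg_rc hmu0).
  apply: ccvg_normc.
  have ev : \forall L \near \oo, (i < L)%N && (j < L)%N.
    exists (maxn i j).+1 => // L /= hL.
    apply/andP; split; apply: leq_trans hL; rewrite ltnS ?leq_maxl ?leq_maxr //.
  have eqT : forall L, (i < L)%N -> (j < L)%N ->
      blk (T_PFASST tf tc QD QDc A Ac TFCA TCFA L (mu L)) i j =
      if (j <= i)%N then tau tf tc QD QDc A Ac TFCA TCFA (mu L) (i - j)%N else 0.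
    move=> L hi hj.
    have L0 : (0 < L)%N by apply: leq_ltn_trans hi.
    rewrite T_BT; first exact: blk_BT.
      by have := hP L; rewrite Phat_BT => /(BT_unit0 L0).
    by have := hPt L; rewrite Ptil_BT => /(BT_unit0 L0).
  case: (leqP j i) => ji.
    rewrite -(tau0 QD QDc A Ac TCFA hcomm).
    apply: (ccvg_near (f := fun L => tau tf tc QD QDc A Ac TFCA TCFA (mu L) (i - j)%N a b)); last exact: hs.
    apply: filterS ev => L /andP[hi hj]; by rewrite eqT // ji.
  rewrite mxE.
  apply: (ccvg_near (f := fun _ => 0)); last exact: ccvg_cst.
  apply: filterS ev => L /andP[hi hj]; rewrite eqT //.
  by rewrite leqNgt ji /= mxE.
exists 2%N; split.
  by move=> k hk; rewrite /tlim; case: k hk => [|[|k]].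
apply: ess_ge1 => x.
have [w w0 hw] := ker_vec (cplx TFCA) HN.
have symb : symbol (tlim tf tc TFCA TCFA) 2 x =
    expi x *: (Hf R M N *m (1%:M - tcf0 tf tc TCFA *m tfc0 tf tc TFCA)).
  rewrite /symbol big_ord_recr big_ord1 /= /tlim /=.
  by rewrite scaler0 add0r mul1r.
have nE : Normc.normc (expi x) = 1.
  by rewrite /expi /= cos2Dsin2 sqrtr1.
rewrite -nE; apply: (specrad_ge (v := vv M w)).
  exact: vv_neq0.
by rewrite symb -scalemxAl (t1_vv tf tc TCFA w0 hw M0).
Qed.
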